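(* Let $(G,c)$ be a W-state graph, and let $X$ and $X'$ be the vertex sets of the two connected components of the spanning subgraph $G_m=(V(G),E_m(G))$ of monochromatic edges. If $|X|=1$ or $|X'|=1$, then $(G,c)$ is a W-cone.
   Context: Graphs may have parallel edges but no loops. A half-edge $2$-colouring $c$ of $G$ assigns to each pair $(e,w)$ with $w$ an endpoint of edge $e$ a colour in $\{0,1\}$ (0 = blue, 1 = red). An edge $e=uv$ is bichromatic if $c(e,u)\neq c(e,v)$ and monochromatic otherwise; $E_m(G)$, $E_b(G)$ denote the monochromatic and bichromatic edge sets; standing convention: monochromatic edges are blue at both ends. A graph is matching-covered if every edge lies in some perfect matching. A W-state graph is a half-edge $2$-coloured matching-covered graph $(G,c)$ in which every perfect matching contains exactly one bichromatic edge, and every vertex $v$ is incident with an edge $e$ with $c(e,v)=1$. For any W-state graph, $G_m$ has exactly two connected components. A W-cone is a half-edge $2$-coloured matching-covered graph $(G,c)$ containing a vertex $v$ adjacent to all other vertices (the apex) such that the set of edges incident with $v$ equals $E_b(G)$, $E(G-v)=E_m(G)$, and every vertex $u$ is incident with an edge $e$ with $c(e,u)=1$. *)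

(* Defs.v *)
From mathcomp Require Import all_boot all_order.
Set Implicit Arguments. Unset Strict Implicit. Unset Printing Implicit Defensive.

(* Parallel edges are allowed (distinct edges may have
   the same ends); loops are excluded by the hypothesis [loopless ends].
   A half-edge 2-colouring is [c : E -> V -> bool]; only the values
   [c e w] for w an endpoint of e are meaningful (false = blue, true = red). *)

Section Graphs.
Variables (V E : finType) (ends : E -> V * V) (c : E -> V -> bool).

Definition loopless : Prop := forall e, (ends e).1 != (ends e).2.

Definition incident (e : E) (w : V) : bool :=
  (w == (ends e).1) || (w == (ends e).2).

Definition bichromatic (e : E) : bool := c e (ends e).1 != c e (ends e).2.
Definition monochromatic (e : E) : bool := ~~ bichromatic e.

Definition mono_blue : Prop :=
  forall e, monochromatic e -> c e (ends e).1 = false /\ c e (ends e).2 = false.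

Definition perfect_matching (M : {set E}) : Prop :=
  forall v : V, #|[set e in M | incident e v]| = 1%N.

Definition matching_covered : Prop :=
  forall e : E, exists M : {set E}, perfect_matching M /\ e \in M.

Definition red_at_every_vertex : Prop :=
  forall v : V, exists e : E, incident e v /\ c e v = true.

Definition W_state : Prop :=
  [/\ matching_covered,
      (forall M : {set E}, perfect_matching M ->
         #|[set e in M | bichromatic e]| = 1%N)
    & red_at_every_vertex].

Definition adj_m : rel V := fun u w =>
  [exists e : E, monochromatic e &&
     (((ends e).1 == u) && ((ends e).2 == w) ||
      ((ends e).1 == w) && ((ends e).2 == u))].

Definition comp_m (x : V) : {set V} := [set y | connect adj_m x y].

Definition is_comp_m (X : {set V}) : Prop := exists x : V, X = comp_m x.

Definition adjacent (u w : V) : Prop :=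
  exists e : E, ((ends e).1 == u) && ((ends e).2 == w) ||
                ((ends e).1 == w) && ((ends e).2 == u).

Definition W_cone : Prop :=
  [/\ matching_covered,
      red_at_every_vertex
    & exists v : V,
        [/\ (forall u : V, u != v -> adjacent u v),
            (forall e : E, incident e v = bichromatic e)
          & (forall e : E, ~~ incident e v = monochromatic e)]].

End Graphs.

(* Main.v *)
Require Import Defs.
From mathcomp Require Import all_boot all_order.

Lemma key (V E : finType) (ends : E -> V * V) (c : E -> V -> bool) (v : V) :
  loopless ends -> mono_blue ends c -> W_state ends c ->
  #|comp_m ends c v| = 1%N -> W_cone ends c.
Proof.
move=> hl hmb [hmc hpm hred] h1; have [x hx] := cards1P (introT eqP h1).
have vin : v \in comp_m ends c v by rewrite inE connect0.
have s1 : forall e, incident ends e v -> bichromatic ends c e.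
  move=> e he; case hbe: (bichromatic ends c e) => //.
  have hmono : monochromatic ends c e by rewrite /monochromatic hbe.
  have hne := hl e.
  have [w [hw1 hw2]] : exists w, w != v /\ adj_m ends c v w.
    case/orP: he => /eqP hv.
    - exists (ends e).2; split; first by rewrite hv eq_sym.
      by apply/existsP; exists e; rewrite hmono hv !eqxx.
    - exists (ends e).1; split; first by rewrite hv.
      by apply/existsP; exists e; rewrite hmono hv !eqxx ?orbT.
  have win : w \in comp_m ends c v by rewrite inE connect1.
  move: vin win; rewrite hx !inE => /eqP hv /eqP hw.
  by rewrite hv hw eqxx in hw1.
have s2 : forall e, bichromatic ends c e -> incident ends e v.
  move=> e hb; case hie: (incident ends e v) => //.
  have hni : ~~ incident ends e v by rewrite hie.
  have [M [hM eM]] := hmc e.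
  have [f hf] := cards1P (introT eqP (hM v)).
  have : f \in [set g in M | incident ends g v] by rewrite hf inE.
  rewrite inE => /andP [fM fv].
  have [g hg] := cards1P (introT eqP (hpm M hM)).
  have : e \in [set g in M | bichromatic ends c g] by rewrite inE eM hb.
  have : f \in [set g in M | bichromatic ends c g] by rewrite inE fM s1.
  rewrite hg !inE => /eqP fg /eqP eg.
  by rewrite eg -fg fv in hni.
split => //; exists v; split.
- move=> u huv.
  have [e [heu ceu]] := hred u.
  have hb : bichromatic ends c e.
    case hbe: (bichromatic ends c e) => //.
    have hm : monochromatic ends c e by rewrite /monochromatic hbe.
    have [k1 k2] := hmb e hm.
    by case/orP: heu => /eqP hu; rewrite hu ?k1 ?k2 in ceu.
  have hev := s2 e hb.
  exists e; have hne := hl e.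
  case/orP: heu => /eqP hu; case/orP: hev => /eqP hv.
  + by rewrite hu hv eqxx in huv.
  + by rewrite -hu -hv !eqxx.
  + by rewrite -hu -hv !eqxx orbT.
  + by rewrite hu hv eqxx in huv.
- move=> e; apply/idP/idP; [exact: s1 | exact: s2].
- move=> e; rewrite /monochromatic; congr negb; apply/idP/idP; [exact: s1 | exact: s2].
Qed.

Theorem mainTheorem10 (V E : finType) (ends : E -> V * V) (c : E -> V -> bool)
  (X X' : {set V}) :
  loopless ends ->
  mono_blue ends c ->
  W_state ends c ->
  is_comp_m ends c X -> is_comp_m ends c X' -> X != X' ->
  (#|X| = 1%N \/ #|X'| = 1%N) ->
  W_cone ends c.
Proof.
move=> hl hmb hw [x ->] [x' ->] _ [h|h]; exact: key h.
Qed.
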